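(* Let $T\in(0,\infty]$ and let $u(x,t)=(u_1,u_2)$, $x=(x_1,x_2)\in\mathbb{R}^2$, $t\in[0,T)$, be a smooth divergence-free velocity field, $u=\nabla^{\perp}\psi=\left(-\frac{\partial\psi}{\partial x_2},\frac{\partial\psi}{\partial x_1}\right)$ for a smooth stream function $\psi$. Suppose $[a,b]$ ($a<b$) and $f_\pm\in C^1([a,b]\times[0,T))$ satisfy: (i) $f_-(x_1,t)<f_+(x_1,t)$ for all $x_1\in[a,b]$, $t\in[0,T)$; (ii) $u_2(x_1,x_2,t)=\frac{\partial f_\pm}{\partial x_1}(x_1,t)\,u_1(x_1,x_2,t)+\frac{\partial f_\pm}{\partial t}(x_1,t)$ at $x_2=f_\pm(x_1,t)$ for all $x_1\in[a,b]$, $t\in[0,T)$ (the arcs $x_2=f_\pm(x_1,t)$ move with the fluid); and (iii) the velocity growth is controlled: $$\int_0^T\sup\{|u(x_1,x_2,t)|: x_1\in[a,b],\ f_-(x_1,t)\le x_2\le f_+(x_1,t)\}\,dt<\infty.$$ Then it is not the case that both $f_+(x_1,t)-f_-(x_1,t)$ is bounded on $[a,b]\times[0,T)$ and $\lim_{t\to T^-}(f_+(x_1,t)-f_-(x_1,t))=0$ for every $x_1\in[a,b]$; that is, a sharp front cannot develop at time $T$.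
   Context: A sharp front at time $T$ means the existence of $[a,b]$, $f_\pm$ as in (i)–(ii) such that moreover $f_+-f_-$ is bounded on $[a,b]\times[0,T)$ and $\lim_{t\to T^-}(f_+(x_1,t)-f_-(x_1,t))=0$ for all $x_1\in[a,b]$. The spatial domain may be $\mathbb{R}^2$ or the torus $\mathbb{R}^2/\mathbb{Z}^2$. *)

(* Defs.v *)
From Stdlib Require Import Reals List.
From Coquelicot Require Import Coquelicot.
Open Scope R_scope.

Definition pd3 (i : nat) (g : R -> R -> R -> R) : R -> R -> R -> R :=
  fun x y t =>
    match i with
    | O => Derive (fun z => g z y t) x
    | S O => Derive (fun z => g x z t) y
    | _ => Derive (fun z => g x y z) t
    end.

Definition ex_pd3 (i : nat) (g : R -> R -> R -> R) (x y t : R) : Prop :=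
  match i with
  | O => ex_derive (fun z => g z y t) x
  | S O => ex_derive (fun z => g x z t) y
  | _ => ex_derive (fun z => g x y z) t
  end.

Fixpoint iter_pd3 (l : list nat) (g : R -> R -> R -> R) : R -> R -> R -> R :=
  match l with
  | nil => g
  | i :: l' => pd3 i (iter_pd3 l' g)
  end.

Definition uncurry3 (g : R -> R -> R -> R) (p : R * R * R) : R :=
  g (fst (fst p)) (snd (fst p)) (snd p).

Definition smooth3_on (O : R * R * R -> Prop) (g : R -> R -> R -> R) : Prop :=
  open O /\
  forall (l : list nat) (x y t : R), O (x, y, t) ->
    continuous (uncurry3 (iter_pd3 l g)) (x, y, t) /\
    forall i : nat, ex_pd3 i (iter_pd3 l g) x y t.

Definition uncurry2 (g : R -> R -> R) (p : R * R) : R := g (fst p) (snd p).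

Definition d_x1 (f : R -> R -> R) : R -> R -> R :=
  fun x t => Derive (fun z => f z t) x.
Definition d_t (f : R -> R -> R) : R -> R -> R :=
  fun x t => Derive (fun z => f x z) t.

Definition C1_2_on (O : R * R -> Prop) (f : R -> R -> R) : Prop :=
  open O /\
  forall x t : R, O (x, t) ->
    continuous (uncurry2 f) (x, t) /\
    ex_derive (fun z => f z t) x /\ ex_derive (fun z => f x z) t /\
    continuous (uncurry2 (d_x1 f)) (x, t) /\
    continuous (uncurry2 (d_t f)) (x, t).

Definition in_time (T : Rbar) (t : R) : Prop := 0 <= t /\ Rbar_lt (Finite t) T.

(** Smooth on R^2 x [0,T) : restriction of a smooth function on an open
    neighbourhood of R^2 x [0,T) (standard definition on non-open sets). *)
Definition smooth_on_strip (T : Rbar) (psi : R -> R -> R -> R) : Prop :=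
  exists O : R * R * R -> Prop,
    (forall x y t, in_time T t -> O (x, y, t)) /\ smooth3_on O psi.

Definition C1_on_rect (a b : R) (T : Rbar) (f : R -> R -> R) : Prop :=
  exists O : R * R -> Prop,
    (forall x t, a <= x <= b -> in_time T t -> O (x, t)) /\ C1_2_on O f.

Definition vel1 (psi : R -> R -> R -> R) : R -> R -> R -> R := fun x y t => - pd3 1 psi x y t.
Definition vel2 (psi : R -> R -> R -> R) : R -> R -> R -> R := fun x y t => pd3 0 psi x y t.
Definition vel_norm (psi : R -> R -> R -> R) (x y t : R) : R :=
  sqrt (vel1 psi x y t ^ 2 + vel2 psi x y t ^ 2).

Definition vel_sup (psi : R -> R -> R -> R) (a b : R) (fm fp : R -> R -> R) (t : R) : R :=
  real (Lub_Rbar (fun r => exists x1 x2, a <= x1 <= b /\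
          fm x1 t <= x2 <= fp x1 t /\ r = vel_norm psi x1 x2 t)).

Definition lim_left_at (h : R -> R) (T : Rbar) (l : R) : Prop :=
  forall eps : R, 0 < eps -> exists s : R, 0 <= s /\ Rbar_lt (Finite s) T /\
    forall t : R, s < t -> Rbar_lt (Finite t) T -> Rabs (h t - l) < eps.

(* Main.v *)
Require Import Defs.
From Stdlib Require Import Reals List Lra Classical.
From Coquelicot Require Import Coquelicot.
Open Scope R_scope.

Lemma cousin (P : R -> R -> Prop) (a b : R) : a <= b ->
  (forall u v w, u <= v -> v <= w -> P u v -> P v w -> P u w) ->
  (forall x, a <= x <= b -> exists d, 0 < d /\
      forall u v, x - d < u -> u <= x -> x <= v -> v < x + d -> P u v) ->
  P a b.
Proof.
intros ab Hg Hl.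
set (E := fun s => a <= s <= b /\ P a s).
assert (Ea : E a).
{ split; [lra|]. destruct (Hl a) as [d [d0 Hd]]; [lra|]. apply Hd; lra. }
assert (Hb : bound E).
{ exists b. intros s [Hs _]. lra. }
destruct (completeness E Hb (ex_intro _ a Ea)) as [c [Hc1 Hc2]].
assert (ac : a <= c) by (apply Hc1; exact Ea).
assert (cb : c <= b) by (apply Hc2; intros s [Hs _]; lra).
destruct (Hl c) as [d [d0 Hd]]; [lra|].
assert (Hs : exists s, E s /\ c - d < s).
{ apply NNPP; intro Hn.
  assert (c <= c - d); [|lra].
  apply Hc2; intros s Es.
  destruct (Rle_dec s (c - d)); [auto|].
  exfalso; apply Hn; exists s; split; [auto|lra]. }
destruct Hs as [s [[Hs1 Hs2] Hs3]].
assert (sc : s <= c) by (apply Hc1; split; auto).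
assert (Pac : P a c).
{ apply (Hg a s c); try lra; auto. apply Hd; lra. }
destruct (Rle_dec b c) as [bc|bc].
{ replace b with c by lra; exact Pac. }
set (v := Rmin b (c + d / 2)).
assert (cv : c < v) by (unfold v; apply Rmin_case; lra).
assert (vb : v <= b) by (unfold v; apply Rmin_l).
assert (vd : v < c + d) by (unfold v; apply Rle_lt_trans with (c + d/2); [apply Rmin_r|lra]).
assert (Ev : E v).
{ split; [lra|]. apply (Hg a c v); try lra; auto. apply Hd; lra. }
assert (v <= c) by (apply Hc1; exact Ev). lra.
Qed.

Lemma cover (S : R -> R -> R -> Prop) (a b : R) : a <= b ->
  (forall x d M d' M', S x d M -> 0 < d' -> d' <= d -> M <= M' -> S x d' M') ->
  (forall x, a <= x <= b -> exists r d M, 0 < r /\ 0 < d /\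
      forall x', x - r < x' < x + r -> S x' d M) ->
  exists d M, 0 < d /\ forall x, a <= x <= b -> S x d M.
Proof.
intros ab Hm Hl.
set (P := fun u v => exists d M, 0 < d /\ forall x, u <= x <= v -> S x d M).
change (P a b).
apply cousin; auto.
- intros u v w uv vw [d1 [M1 [d10 H1]]] [d2 [M2 [d20 H2]]].
  exists (Rmin d1 d2), (Rmax M1 M2); split.
  + apply Rmin_case; auto.
  + intros x Hx. destruct (Rle_dec x v).
    * apply (Hm x d1 M1); [apply H1; lra | apply Rmin_case; lra | apply Rmin_l | apply Rmax_l].
    * apply (Hm x d2 M2); [apply H2; lra | apply Rmin_case; lra | apply Rmin_r | apply Rmax_r].
- intros x Hx. destruct (Hl x Hx) as [r [d [M [r0 [d0 H]]]]].
  exists r; split; auto. intros u v H1 H2 H3 H4.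
  exists d, M; split; auto. intros y Hy. apply H; lra.
Qed.

Lemma cont3_eps (G : R -> R -> R -> R) x y t :
  continuous (uncurry3 G) (x, y, t) ->
  forall eps, 0 < eps -> exists d, 0 < d /\ forall x' y' t',
    Rabs (x' - x) < d -> Rabs (y' - y) < d -> Rabs (t' - t) < d ->
    Rabs (G x' y' t' - G x y t) < eps.
Proof.
intros Hc eps e0.
destruct (proj1 (filterlim_locally _ _) Hc (mkposreal eps e0)) as [d Hd].
exists d; split; [apply cond_pos|].
intros x' y' t' H1 H2 H3.
apply (Hd (x', y', t')).
repeat split; auto.
Qed.

Lemma cont2_eps (G : R -> R -> R) x t :
  continuous (uncurry2 G) (x, t) ->
  forall eps, 0 < eps -> exists d, 0 < d /\ forall x' t',
    Rabs (x' - x) < d -> Rabs (t' - t) < d ->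
    Rabs (G x' t' - G x t) < eps.
Proof.
intros Hc eps e0.
destruct (proj1 (filterlim_locally _ _) Hc (mkposreal eps e0)) as [d Hd].
exists d; split; [apply cond_pos|].
intros x' t' H1 H2.
apply (Hd (x', t')).
repeat split; auto.
Qed.

Lemma bound3 (G : R -> R -> R -> R) a1 b1 a2 b2 a3 b3 :
  a1 <= b1 -> a2 <= b2 -> a3 <= b3 ->
  (forall x y t, a1 <= x <= b1 -> a2 <= y <= b2 -> a3 <= t <= b3 ->
     forall eps, 0 < eps -> exists d, 0 < d /\ forall x' y' t',
    Rabs (x' - x) < d -> Rabs (y' - y) < d -> Rabs (t' - t) < d ->
    Rabs (G x' y' t' - G x y t) < eps) ->
  exists M, forall x y t, a1 <= x <= b1 -> a2 <= y <= b2 -> a3 <= t <= b3 ->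
     Rabs (G x y t) <= M.
Proof.
intros h1 h2 h3 Hc.
assert (L1 : forall x0 t0, a1 <= x0 <= b1 -> a3 <= t0 <= b3 ->
  exists d M, 0 < d /\ forall y, a2 <= y <= b2 ->
    forall x' t', Rabs (x' - x0) < d -> Rabs (t' - t0) < d -> Rabs (G x' y t') <= M).
{ intros x0 t0 hx ht.
  apply (cover (fun y d M => forall x' t', Rabs (x' - x0) < d -> Rabs (t' - t0) < d ->
     Rabs (G x' y t') <= M)); auto.
  - intros y d M d' M' H d0 dd MM x' t' H1 H2.
    apply Rle_trans with M; auto. apply H; lra.
  - intros y hy. destruct (Hc _ _ _ hx hy ht 1 Rlt_0_1) as [d [d0 Hd]].
    exists d, d, (Rabs (G x0 y t0) + 1); split; [auto|split; [auto|]].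
    intros y' hy' x' t' H1 H2.
    assert (H := Hd x' y' t' H1 ltac:(apply Rabs_def1; lra) H2).
    assert (H' := Rabs_triang_inv (G x' y' t') (G x0 y t0)). lra. }
assert (L2 : forall t0, a3 <= t0 <= b3 ->
  exists d M, 0 < d /\ forall x, a1 <= x <= b1 ->
    forall t', Rabs (t' - t0) < d -> forall y, a2 <= y <= b2 -> Rabs (G x y t') <= M).
{ intros t0 ht.
  apply (cover (fun x d M => forall t', Rabs (t' - t0) < d -> forall y, a2 <= y <= b2 ->
     Rabs (G x y t') <= M)); auto.
  - intros x d M d' M' H d0 dd MM t' H1 y hy.
    apply Rle_trans with M; auto. apply H; auto; lra.
  - intros x hx. destruct (L1 x t0 hx ht) as [d [M [d0 Hd]]].
    exists d, d, M; split; [auto|split; [auto|]].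
    intros x' hx' t' H1 y hy. apply Hd; auto. apply Rabs_def1; lra. }
destruct (cover (fun t d M => forall x, a1 <= x <= b1 -> forall y, a2 <= y <= b2 ->
     Rabs (G x y t) <= M) a3 b3) as [d [M [d0 H]]]; auto.
- intros t d M d' M' H d0 dd MM x hx y hy. apply Rle_trans with M; auto.
- intros t ht. destruct (L2 t ht) as [d [M [d0 Hd]]].
  exists d, 1, M; split; [auto|split; [lra|]].
  intros t' ht' x hx y hy. apply Hd; auto. apply Rabs_def1; lra.
- exists M. intros x y t hx hy ht. apply H; auto.
Qed.

Lemma lub_facts (E : R -> Prop) (r0 M : R) : E r0 -> (forall r, E r -> r <= M) ->
  (forall r, E r -> r <= real (Lub_Rbar E)) /\ real (Lub_Rbar E) <= M.
Proof.
intros H0 HM.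
destruct (Lub_Rbar_correct E) as [Hub Hlub].
assert (Hle : Rbar_le (Lub_Rbar E) M) by (apply Hlub; intros r Er; apply HM; auto).
assert (Hge : Rbar_le r0 (Lub_Rbar E)) by (apply Hub; auto).
destruct (Lub_Rbar E) as [l| |]; simpl in *; try contradiction.
split; [|auto]. intros r Er. apply (Hub r Er).
Qed.


Lemma mvt_abs (f : R -> R) (a b : R) :
  (forall z, ex_derive f z) ->
  exists c, Rabs (c - a) <= Rabs (b - a) /\ f b - f a = Derive f c * (b - a).
Proof.
intros Hd.
destruct (MVT_gen f a b (Derive f)) as [c [Hc He]].
- intros z _. apply Derive_correct, Hd.
- intros z _. apply continuity_pt_filterlim. apply (@ex_derive_continuous R_AbsRing R_NormedModule f z (Hd z)).
- exists c; split; auto.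
  revert Hc; unfold Rmin, Rmax; destruct (Rle_dec a b); intros Hc;
  unfold Rabs; repeat destruct Rcase_abs; lra.
Qed.

Lemma C1_diff (F : R -> R -> R) x y :
 (forall u v, ex_derive (fun z => F z v) u) -> (forall u v, ex_derive (fun z => F u z) v) ->
 continuity_2d_pt (fun u v => Derive (fun z => F z v) u) x y ->
 continuity_2d_pt (fun u v => Derive (fun z => F u z) v) x y ->
 differentiable_pt_lim F x y (Derive (fun z => F z y) x) (Derive (fun z => F x z) y).
Proof.
intros Dx Dy Cx Cy eps.
destruct (Cx (pos_div_2 eps)) as [d1 H1]. destruct (Cy (pos_div_2 eps)) as [d2 H2].
assert (d0 : 0 < Rmin d1 d2) by (apply Rmin_case; apply cond_pos).
exists (mkposreal _ d0). simpl. intros u v Hu Hv.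
assert (Hu1 : Rabs (u - x) < d1) by (apply Rlt_le_trans with (1 := Hu); apply Rmin_l).
assert (Hv1 : Rabs (v - y) < d1) by (apply Rlt_le_trans with (1 := Hv); apply Rmin_l).
assert (Hv2 : Rabs (v - y) < d2) by (apply Rlt_le_trans with (1 := Hv); apply Rmin_r).
assert (Hx2 : Rabs (x - x) < d2) by (rewrite Rminus_eq_0, Rabs_R0; apply cond_pos).
destruct (mvt_abs (fun z => F z v) x u (fun z => Dx z v)) as [c1 [Hc1 E1]].
destruct (mvt_abs (fun z => F x z) y v (fun z => Dy x z)) as [c2 [Hc2 E2]].
assert (K1 := H1 c1 v ltac:(lra) Hv1). simpl in K1.
assert (K2 := H2 x c2 Hx2 ltac:(lra)). simpl in K2.
set (A := Derive (fun z => F z v) c1) in *.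
set (A0 := Derive (fun z => F z y) x) in *.
set (B := Derive (fun z => F x z) c2) in *.
set (B0 := Derive (fun z => F x z) y) in *.
replace (F u v - F x y - (A0 * (u - x) + B0 * (v - y))) with
  ((A - A0) * (u - x) + (B - B0) * (v - y)).
2:{ replace (F u v - F x y) with ((F u v - F x v) + (F x v - F x y)) by ring.
    rewrite E1, E2. ring. }
eapply Rle_trans. apply Rabs_triang.
rewrite !Rabs_mult.
assert (M1 : Rabs (u - x) <= Rmax (Rabs (u - x)) (Rabs (v - y))) by apply Rmax_l.
assert (M2 : Rabs (v - y) <= Rmax (Rabs (u - x)) (Rabs (v - y))) by apply Rmax_r.
assert (P1 := Rabs_pos (u - x)). assert (P2 := Rabs_pos (v - y)).
assert (Q1 : Rabs (A - A0) * Rabs (u - x) <= eps / 2 * Rmax (Rabs (u - x)) (Rabs (v - y))).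
{ apply Rmult_le_compat; try lra; apply Rabs_pos. }
assert (Q2 : Rabs (B - B0) * Rabs (v - y) <= eps / 2 * Rmax (Rabs (u - x)) (Rabs (v - y))).
{ apply Rmult_le_compat; try lra; apply Rabs_pos. }
lra.
Qed.


Lemma ball_R (x e y : R) : ball x e y <-> Rabs (y - x) < e.
Proof. reflexivity. Qed.

Lemma cont_eps (f : R -> R) x :
  (forall eps, 0 < eps -> exists d, 0 < d /\ forall y, Rabs (y - x) < d -> Rabs (f y - f x) < eps) ->
  continuous f x.
Proof.
intros H. apply filterlim_locally. intros eps.
destruct (H eps (cond_pos eps)) as [d [d0 Hd]].
exists (mkposreal d d0). intros y Hy. apply Hd. exact Hy.
Qed.

Lemma cont2_x (G : R -> R -> R) x t : continuous (uncurry2 G) (x, t) -> continuous (fun z => G z t) x.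
Proof.
intros Hc. apply cont_eps. intros eps e0.
destruct (cont2_eps G x t Hc eps e0) as [d [d0 Hd]].
exists d; split; auto. intros y Hy. apply Hd; auto. rewrite Rminus_eq_0, Rabs_R0; auto.
Qed.

Lemma cont2_t (G : R -> R -> R) x t : continuous (uncurry2 G) (x, t) -> continuous (fun z => G x z) t.
Proof.
intros Hc. apply cont_eps. intros eps e0.
destruct (cont2_eps G x t Hc eps e0) as [d [d0 Hd]].
exists d; split; auto. intros y Hy. apply Hd; auto. rewrite Rminus_eq_0, Rabs_R0; auto.
Qed.

Lemma cont2_swap (G : R -> R -> R) x t : continuous (uncurry2 G) (x, t) ->
  continuity_2d_pt (fun u v => G v u) t x.
Proof.
intros Hc eps. destruct (cont2_eps G x t Hc eps (cond_pos eps)) as [d [d0 Hd]].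
exists (mkposreal d d0). intros u v Hu Hv. apply Hd; auto.
Qed.

Lemma cont2_2d (G : R -> R -> R) x t : continuous (uncurry2 G) (x, t) ->
  continuity_2d_pt G x t.
Proof.
intros Hc eps. destruct (cont2_eps G x t Hc eps (cond_pos eps)) as [d [d0 Hd]].
exists (mkposreal d d0). intros u v Hu Hv. apply Hd; auto.
Qed.

Lemma cont3_2d (G : R -> R -> R -> R) x y t : continuous (uncurry3 G) (x, y, t) ->
  continuity_2d_pt (fun u v => G u v t) x y.
Proof.
intros Hc eps. destruct (cont3_eps G x y t Hc eps (cond_pos eps)) as [d [d0 Hd]].
exists (mkposreal d d0). intros u v Hu Hv. apply Hd; auto. rewrite Rminus_eq_0, Rabs_R0; auto.
Qed.

Lemma in_time_le (T : Rbar) s t : 0 <= s -> s <= t -> in_time T t -> in_time T s.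
Proof.
intros H0 H1 [_ H2]. split; auto. destruct T; simpl in *; auto; lra.
Qed.

Lemma time_open (T : Rbar) t : 0 < t -> in_time T t ->
  exists r, 0 < r /\ forall s, Rabs (s - t) < r -> 0 < s /\ in_time T s.
Proof.
intros t0 [_ Ht]. destruct T as [T'| |]; simpl in Ht; try contradiction.
- exists (Rmin t (T' - t)); split. apply Rmin_case; lra.
  intros s Hs. assert (H1 := Rmin_l t (T' - t)). assert (H2 := Rmin_r t (T' - t)).
  apply Rabs_def2 in Hs. split; [lra|]. split; simpl; lra.
- exists t; split; auto. intros s Hs. apply Rabs_def2 in Hs. split; [lra|]. split; simpl; auto; lra.
Qed.

Lemma time_next (T : Rbar) t : in_time T t -> exists s, t < s /\ in_time T s.
Proof.
intros [H0 Ht]. destruct T as [T'| |]; simpl in Ht; try contradiction.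
- exists ((t + T') / 2). split; [lra|]. split; simpl; lra.
- exists (t + 1). split; [lra|]. split; simpl; auto; lra.
Qed.

Lemma mvt_in (f : R -> R) (a b : R) : a <= b ->
  (forall z, ex_derive f z) ->
  exists c, a <= c <= b /\ f b - f a = Derive f c * (b - a).
Proof.
intros ab Hd.
destruct (MVT_gen f a b (Derive f)) as [c [Hc He]].
- intros z _. apply Derive_correct, Hd.
- intros z _. apply continuity_pt_filterlim. apply (@ex_derive_continuous R_AbsRing R_NormedModule f z (Hd z)).
- exists c; split; auto. rewrite Rmin_left, Rmax_right in Hc; auto.
Qed.

Lemma norm_bounds (v1 v2 : R) :
  Rabs v1 <= sqrt (v1 ^ 2 + v2 ^ 2) /\ sqrt (v1 ^ 2 + v2 ^ 2) <= Rabs v1 + Rabs v2.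
Proof.
split.
- rewrite <- sqrt_Rsqr_abs. apply sqrt_le_1_alt. unfold Rsqr. nra.
- rewrite <- (sqrt_Rsqr (Rabs v1 + Rabs v2)).
  + apply sqrt_le_1_alt. unfold Rsqr.
    assert (H1 := Rabs_pos v1). assert (H2 := Rabs_pos v2).
    assert (E1 : v1 ^ 2 = Rabs v1 * Rabs v1) by (rewrite <- Rabs_mult; simpl; rewrite Rmult_1_r; symmetry; apply Rabs_pos_eq; nra).
    assert (E2 : v2 ^ 2 = Rabs v2 * Rabs v2) by (rewrite <- Rabs_mult; simpl; rewrite Rmult_1_r; symmetry; apply Rabs_pos_eq; nra).
    nra.
  + assert (H1 := Rabs_pos v1). assert (H2 := Rabs_pos v2). lra.
Qed.

Lemma abs_le_inv x K : Rabs x <= K -> - K <= x <= K.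
Proof. unfold Rabs; destruct Rcase_abs; lra. Qed.

Lemma RInt_lower (f : R -> R) (al be c : R) : al <= be -> ex_RInt f al be ->
  (forall x, al < x < be -> c <= f x) -> (be - al) * c <= RInt f al be.
Proof.
intros h1 h2 h3.
replace ((be - al) * c) with (RInt (fun _ => c) al be).
- apply RInt_le; auto. apply ex_RInt_const.
- rewrite RInt_const. reflexivity.
Qed.


Section Main.
Variables (T : Rbar) (psi : R -> R -> R -> R) (a b : R) (fm fp : R -> R -> R).
Hypothesis Hab : a < b.
Hypothesis Hpsi : forall l x y t, in_time T t ->
  continuous (uncurry3 (iter_pd3 l psi)) (x, y, t) /\ forall i, ex_pd3 i (iter_pd3 l psi) x y t.

Definition C1f (f : R -> R -> R) := forall x t, a <= x <= b -> in_time T t ->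
  continuous (uncurry2 f) (x, t) /\ ex_derive (fun z => f z t) x /\ ex_derive (fun z => f x z) t /\
  continuous (uncurry2 (d_x1 f)) (x, t) /\ continuous (uncurry2 (d_t f)) (x, t).

Definition Transp (f : R -> R -> R) := forall x1 t, a <= x1 <= b -> in_time T t ->
  vel2 psi x1 (f x1 t) t = d_x1 f x1 t * vel1 psi x1 (f x1 t) t + d_t f x1 t.

Lemma chain f : C1f f -> Transp f -> forall x t, a <= x <= b -> in_time T t ->
  is_derive (fun z => psi z (f z t) t) x (d_t f x t).
Proof.
intros Hf Hii x t hx ht.
destruct (Hf x t hx ht) as [_ [Dfx _]].
assert (D := C1_diff (fun u v => psi u v t) x (f x t)).
assert (Dx : forall u v, ex_derive (fun z => psi z v t) u) by (intros u v; exact (proj2 (Hpsi nil u v t ht) 0%nat)).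
assert (Dy : forall u v, ex_derive (fun z => psi u z t) v) by (intros u v; exact (proj2 (Hpsi nil u v t ht) 1%nat)).
specialize (D Dx Dy).
assert (Cx := cont3_2d _ _ _ _ (proj1 (Hpsi (0%nat :: nil) x (f x t) t ht))).
assert (Cy := cont3_2d _ _ _ _ (proj1 (Hpsi (1%nat :: nil) x (f x t) t ht))).
specialize (D Cx Cy).
assert (H := derivable_pt_lim_comp_2d (fun u v => psi u v t) (fun z => z) (fun z => f z t) x _ _ 1 _ D
   (derivable_pt_lim_id x) (proj1 (is_derive_Reals _ _ _) (Derive_correct _ _ Dfx))).
apply is_derive_Reals.
replace (d_t f x t) with (Derive (fun z : R => psi z (f x t) t) x * 1 +
      Derive (fun z : R => psi x z t) (f x t) * Derive (fun z : R => f z t) x); auto.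
assert (E := Hii x t hx ht). unfold vel1, vel2, pd3, d_x1 in E. rewrite E. ring.
Qed.

Variable (Hfp : C1f fp) (Hfm : C1f fm).
Variable (Hord : forall x1 t, a <= x1 <= b -> in_time T t -> fm x1 t < fp x1 t).
Variable (Hiip : Transp fp) (Hiim : Transp fm).

Definition h x t := fp x t - fm x t.
Definition g x t := psi x (fp x t) t - psi x (fm x t) t.
Definition U := vel_sup psi a b fm fp.

Lemma g_deriv x t : a <= x <= b -> in_time T t ->
  is_derive (fun z => g z t) x (d_t fp x t - d_t fm x t).
Proof.
intros hx ht. unfold g. apply (@is_derive_minus R_AbsRing R_NormedModule); apply chain; auto.
Qed.


Lemma f_bound f : C1f f -> forall p q, 0 <= p <= q -> in_time T q ->
  exists K, forall x t, a <= x <= b -> p <= t <= q -> Rabs (f x t) <= K.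
Proof.
intros Hf p q hpq hq.
destruct (bound3 (fun x _ t => f x t) a b 0 0 p q) as [K HK]; try lra.
- intros x y t hx hy ht eps e0.
  assert (ht' : in_time T t) by (apply in_time_le with q; lra || auto).
  destruct (cont2_eps f x t (proj1 (Hf x t hx ht')) eps e0) as [d [d0 Hd]].
  exists d; split; auto.
- exists K. intros x t hx ht. apply (HK x 0 t); auto; lra.
Qed.

Lemma psi_bound l : forall K p q, 0 <= p <= q -> in_time T q ->
  exists M, forall x y t, a <= x <= b -> -K <= y <= K -> p <= t <= q -> Rabs (iter_pd3 l psi x y t) <= M.
Proof.
intros K p q hpq hq.
destruct (Rle_dec (-K) K) as [hK|hK].
2:{ exists 0. intros. lra. }
destruct (bound3 (iter_pd3 l psi) a b (-K) K p q) as [M HM]; try lra.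
- intros x y t hx hy ht eps e0.
  assert (ht' : in_time T t) by (apply in_time_le with q; lra || auto).
  exact (cont3_eps _ x y t (proj1 (Hpsi l x y t ht')) eps e0).
- exists M; auto.
Qed.

Lemma U_bound p q : 0 <= p <= q -> in_time T q -> exists M, forall t, p <= t <= q ->
  (0 <= U t <= M) /\ forall x y, a <= x <= b -> fm x t <= y <= fp x t -> vel_norm psi x y t <= U t.
Proof.
intros hpq hq.
destruct (f_bound fm Hfm p q hpq hq) as [K1 HK1].
destruct (f_bound fp Hfp p q hpq hq) as [K2 HK2].
set (K := Rabs K1 + Rabs K2).
destruct (psi_bound (1%nat :: nil) K p q hpq hq) as [M1 HM1].
destruct (psi_bound (0%nat :: nil) K p q hpq hq) as [M0 HM0].
exists (M1 + M0). intros t ht.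
assert (ht' : in_time T t) by (apply in_time_le with q; lra || auto).
set (E := fun r => exists x1 x2, a <= x1 <= b /\ fm x1 t <= x2 <= fp x1 t /\ r = vel_norm psi x1 x2 t).
assert (E0 : E (vel_norm psi a (fm a t) t)).
{ exists a, (fm a t). split; [lra|]. split; auto. split; [lra|].
  left; apply Hord; auto; lra. }
assert (EM : forall r, E r -> r <= M1 + M0).
{ intros r [x1 [x2 [hx [hy ->]]]].
  assert (B1 := HK1 x1 t hx ht). assert (B2 := HK2 x1 t hx ht).
  assert (hy' : - K <= x2 <= K).
  { unfold K. apply abs_le_inv in B1. apply abs_le_inv in B2.
    assert (A1 := Rle_abs K1). assert (A1' := Rle_abs (-K1)). rewrite Rabs_Ropp in A1'.
    assert (A2 := Rle_abs K2). assert (A2' := Rle_abs (-K2)). rewrite Rabs_Ropp in A2'.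
    lra. }
  assert (N := norm_bounds (vel1 psi x1 x2 t) (vel2 psi x1 x2 t)).
  unfold vel_norm. 
  assert (V1 : Rabs (vel1 psi x1 x2 t) <= M1).
  { unfold vel1. rewrite Rabs_Ropp. apply (HM1 x1 x2 t); auto. }
  assert (V2 : Rabs (vel2 psi x1 x2 t) <= M0).
  { unfold vel2. apply (HM0 x1 x2 t); auto. }
  lra. }
destruct (lub_facts E _ _ E0 EM) as [L1 L2].
unfold U, vel_sup. fold E.
split.
- split; auto. apply Rle_trans with (2 := L1 _ E0). unfold vel_norm. apply sqrt_pos.
- intros x y hx hy. apply L1. exists x, y. auto.
Qed.

Lemma g_bound x t : a <= x <= b -> in_time T t -> Rabs (g x t) <= U t * h x t.
Proof.
intros hx ht.
assert (hlt := Hord x t hx ht).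
destruct (mvt_in (fun z => psi x z t) (fm x t) (fp x t)) as [c [hc E]]; [lra| |].
{ intros z. exact (proj2 (Hpsi nil x z t ht) 1%nat). }
destruct (U_bound t t) as [M HM]; [split; [apply ht|lra]|auto|].
destruct (HM t) as [_ HU]; [lra|].
assert (Hn := HU x c hx hc).
assert (N := norm_bounds (vel1 psi x c t) (vel2 psi x c t)).
unfold g, h. rewrite E, Rabs_mult, (Rabs_pos_eq (fp x t - fm x t)) by lra.
apply Rmult_le_compat_r; [lra|].
unfold vel_norm, vel1, pd3 in *. simpl in *. rewrite Rabs_Ropp in N. lra.
Qed.


Lemma psif_cont f : C1f f -> forall x t, a <= x <= b -> in_time T t ->
  continuous (fun s => psi x (f x s) s) t.
Proof.
intros Hf x t hx ht. apply cont_eps. intros eps e0.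
destruct (cont3_eps psi x (f x t) t (proj1 (Hpsi nil x (f x t) t ht)) eps e0) as [d1 [d10 H1]].
destruct (cont2_eps f x t (proj1 (Hf x t hx ht)) d1 d10) as [d2 [d20 H2]].
exists (Rmin d1 d2); split; [apply Rmin_case; auto|].
intros s Hs.
assert (Hs1 : Rabs (s - t) < d1) by (apply Rlt_le_trans with (1 := Hs); apply Rmin_l).
assert (Hs2 : Rabs (s - t) < d2) by (apply Rlt_le_trans with (1 := Hs); apply Rmin_r).
apply H1; auto.
- rewrite Rminus_eq_0, Rabs_R0; auto.
- apply H2; auto. rewrite Rminus_eq_0, Rabs_R0; auto.
Qed.

Lemma g_cont_t x t : a <= x <= b -> in_time T t -> continuous (fun s => g x s) t.
Proof.
intros hx ht. unfold g.
apply (@continuous_minus R_UniformSpace R_AbsRing R_NormedModule); apply psif_cont; auto.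
Qed.

Lemma fx_cont f : C1f f -> forall x t, a <= x <= b -> in_time T t -> continuous (fun z => f z t) x.
Proof. intros Hf x t hx ht. apply cont2_x. apply (Hf x t hx ht). Qed.

Lemma ex_RInt_f f : C1f f -> forall al be t, a <= al -> al <= be -> be <= b -> in_time T t ->
  ex_RInt (fun x => f x t) al be.
Proof.
intros Hf al be t h1 h2 h3 ht. apply (@ex_RInt_continuous R_CompleteNormedModule).
intros z Hz. rewrite Rmin_left, Rmax_right in Hz by lra. apply fx_cont; auto; lra.
Qed.

Lemma ex_RInt_h al be t : a <= al -> al <= be -> be <= b -> in_time T t ->
  ex_RInt (fun x => h x t) al be.
Proof.
intros. unfold h. apply (@ex_RInt_minus R_NormedModule); apply ex_RInt_f; auto.
Qed.

Lemma param_deriv f : C1f f -> forall al be t, a <= al -> al <= be -> be <= b -> 0 < t -> in_time T t ->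
  is_derive (fun s => RInt (fun x => f x s) al be) t (RInt (fun x => d_t f x t) al be).
Proof.
intros Hf al be t h1 h2 h3 t0 ht.
destruct (time_open T t t0 ht) as [r [r0 Hr]].
apply (is_derive_RInt_param (fun u x => f x u) al be t).
- exists (mkposreal r r0). intros u Hu x Hx. rewrite Rmin_left, Rmax_right in Hx by lra.
  destruct (Hr u Hu) as [_ hu]. apply (Hf x u); auto; lra.
- intros x Hx. rewrite Rmin_left, Rmax_right in Hx by lra.
  apply (cont2_swap (d_t f) x t). apply (Hf x t); auto; lra.
- exists (mkposreal r r0). intros u Hu. destruct (Hr u Hu) as [_ hu]. apply ex_RInt_f; auto.
Qed.

Lemma area_deriv al be t : a <= al -> al <= be -> be <= b -> 0 < t -> in_time T t ->
  is_derive (fun s => RInt (fun x => h x s) al be) t (g be t - g al t).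
Proof.
intros h1 h2 h3 t0 ht.
destruct (time_open T t t0 ht) as [r [r0 Hr]].
assert (D := @is_derive_minus R_AbsRing R_NormedModule _ _ t _ _
   (param_deriv fp Hfp al be t h1 h2 h3 t0 ht) (param_deriv fm Hfm al be t h1 h2 h3 t0 ht)).
assert (E : minus (RInt (fun x => d_t fp x t) al be) (RInt (fun x => d_t fm x t) al be) = g be t - g al t).
{ rewrite <- (@RInt_minus R_CompleteNormedModule).
  2,3: apply (@ex_RInt_continuous R_CompleteNormedModule); intros z Hz;
       rewrite Rmin_left, Rmax_right in Hz by lra; apply cont2_x; 
       first [apply (Hfp z t) | apply (Hfm z t)]; auto; lra.
  apply is_RInt_unique.
  apply (is_RInt_derive (fun z => g z t)).
  - intros x Hx. rewrite Rmin_left, Rmax_right in Hx by lra. apply g_deriv; auto; lra.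
  - intros x Hx. rewrite Rmin_left, Rmax_right in Hx by lra.
    apply (@continuous_minus R_UniformSpace R_AbsRing R_NormedModule); apply cont2_x;
    first [apply (Hfp x t) | apply (Hfm x t)]; auto; lra. }
assert (D' : is_derive (fun s => RInt (fun x => fp x s) al be - RInt (fun x => fm x s) al be) t (g be t - g al t)).
{ rewrite <- E. exact D. }
apply (is_derive_ext_loc (fun s => RInt (fun x => fp x s) al be - RInt (fun x => fm x s) al be) _ t _); [|exact D'].
exists (mkposreal r r0). intros u Hu. destruct (Hr u Hu) as [_ hu]. simpl.
unfold h. symmetry. apply (@RInt_minus R_CompleteNormedModule); apply ex_RInt_f; auto.
Qed.

Lemma area_diff al be u v : a <= al -> al <= be -> be <= b -> 0 < u -> u <= v -> in_time T v ->
  RInt (fun x => h x v) al be - RInt (fun x => h x u) al be = RInt (fun s => g be s - g al s) u v.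
Proof.
intros h1 h2 h3 u0 uv hv.
symmetry. apply is_RInt_unique.
apply (is_RInt_derive (fun s => RInt (fun x => h x s) al be) (fun s => g be s - g al s)).
- intros s Hs. rewrite Rmin_left, Rmax_right in Hs by lra.
  apply area_deriv; auto; try lra. apply in_time_le with v; auto; lra.
- intros s Hs. rewrite Rmin_left, Rmax_right in Hs by lra.
  assert (hs : in_time T s) by (apply in_time_le with v; auto; lra).
  apply (@continuous_minus R_UniformSpace R_AbsRing R_NormedModule); apply g_cont_t; auto; lra.
Qed.


Lemma h_cont x s : a <= x <= b -> in_time T s -> forall eps, 0 < eps -> exists d, 0 < d /\
  forall x' s', Rabs (x' - x) < d -> Rabs (s' - s) < d -> Rabs (h x' s' - h x s) < eps.
Proof.
intros hx hs eps e0.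
destruct (cont2_eps fp x s (proj1 (Hfp x s hx hs)) (eps/2) ltac:(lra)) as [d1 [d10 H1]].
destruct (cont2_eps fm x s (proj1 (Hfm x s hx hs)) (eps/2) ltac:(lra)) as [d2 [d20 H2]].
exists (Rmin d1 d2); split; [apply Rmin_case; auto|].
intros x' s' Hx Hs.
assert (A1 : Rabs (x' - x) < d1) by (apply Rlt_le_trans with (1 := Hx); apply Rmin_l).
assert (A2 : Rabs (x' - x) < d2) by (apply Rlt_le_trans with (1 := Hx); apply Rmin_r).
assert (B1 : Rabs (s' - s) < d1) by (apply Rlt_le_trans with (1 := Hs); apply Rmin_l).
assert (B2 : Rabs (s' - s) < d2) by (apply Rlt_le_trans with (1 := Hs); apply Rmin_r).
assert (K1 := H1 x' s' A1 B1). assert (K2 := H2 x' s' A2 B2).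
unfold h. replace (fp x' s' - fm x' s' - (fp x s - fm x s)) with
  ((fp x' s' - fp x s) - (fm x' s' - fm x s)) by ring.
eapply Rle_lt_trans. apply Rabs_triang. rewrite Rabs_Ropp. lra.
Qed.

Lemma h_pos x t : a <= x <= b -> in_time T t -> 0 < h x t.
Proof. intros. unfold h. assert (H' := Hord x t H H0). lra. Qed.

Variable HC : forall s, in_time T s -> ex_RInt U 0 s.

Lemma exU u v : 0 <= u -> u <= v -> in_time T v -> ex_RInt U u v.
Proof. intros. apply (ex_RInt_Chasles_2 U 0 u v); auto. Qed.

Variable t0 : R.
Hypothesis t0pos : 0 < t0.
Hypothesis t0time : in_time T t0.
Definition V t := RInt U t0 t.
Definition mm := (a + b) / 2.
Definition dd := (b - a) / 4.
Definition al t := mm - dd - V t.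
Definition be t := mm + dd + V t.
Definition W t := RInt (fun x => h x t) (al t) (be t).
Hypothesis Vsmall : forall t, in_time T t -> t0 <= t -> V t < dd.

Lemma V_facts u v : t0 <= u -> u <= v -> in_time T v ->
  V v - V u = RInt U u v /\ 0 <= RInt U u v /\ 0 <= V u.
Proof.
intros h1 h2 hv.
assert (hu : in_time T u) by (apply in_time_le with v; auto; lra).
assert (E : V v - V u = RInt U u v).
{ unfold V. rewrite <- (RInt_Chasles U t0 u v).
  - change (plus (RInt U t0 u) (RInt U u v)) with (RInt U t0 u + RInt U u v). ring.
  - apply exU; auto; lra.
  - apply exU; auto; lra. }
split; auto.
assert (P : forall p q, t0 <= p -> p <= q -> in_time T q -> 0 <= RInt U p q).
{ intros p q hp hq hqt. apply RInt_ge_0; auto. apply exU; auto; lra.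
  intros x Hx. destruct (U_bound x x) as [M HM]; [split; lra| apply in_time_le with q; auto; lra|].
  apply (HM x); lra. }
split; [apply P; auto|]. unfold V. apply P; auto; lra.
Qed.

Lemma albe_range t : in_time T t -> t0 <= t -> a < al t /\ al t <= be t /\ be t < b.
Proof.
intros ht h1. assert (H1 := Vsmall t ht h1).
destruct (V_facts t t h1 (Rle_refl t) ht) as [_ [_ H2]].
unfold al, be, mm, dd in *. lra.
Qed.


Lemma local_est t1 eps : in_time T t1 -> t0 <= t1 -> 0 < eps -> forall s, t0 <= s <= t1 ->
  exists d, 0 < d /\ forall u v, s - d < u -> u <= s -> s <= v -> v < s + d ->
    t0 <= u -> v <= t1 -> W v - W u >= - eps * (V v - V u).
Proof.
intros ht1 h01 e0 s hs.
destruct (U_bound t0 t1) as [M HM]; [lra|auto|].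
assert (M0 : 0 <= M) by (destruct (HM t0) as [[H1 H2] _]; lra).
assert (hst : in_time T s) by (apply in_time_le with t1; lra || auto).
destruct (albe_range s hst (proj1 hs)) as [R1 [R2 R3]].
set (eta := eps / 4).
destruct (h_cont (al s) s ltac:(lra) hst eta ltac:(unfold eta; lra)) as [da [da0 Ha]].
destruct (h_cont (be s) s ltac:(lra) hst eta ltac:(unfold eta; lra)) as [db [db0 Hb]].
set (del := Rmin da db).
assert (del0 : 0 < del) by (unfold del; apply Rmin_case; auto).
assert (dela : del <= da) by apply Rmin_l.
assert (delb : del <= db) by apply Rmin_r.
exists (del / (M + 1)). split; [apply Rdiv_lt_0_compat; lra|].
intros u v Hu1 Hu2 Hv1 Hv2 Hu0 Hv0.
assert (dM : del / (M + 1) * M < del).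
{ apply Rmult_lt_reg_r with (M + 1); [lra|]. field_simplify; [nra|lra]. }
assert (dle : del / (M + 1) <= del).
{ apply Rmult_le_reg_r with (M + 1); [lra|]. field_simplify; [nra|lra]. }
assert (hv : in_time T v) by (apply in_time_le with t1; lra || auto).
assert (hu : in_time T u) by (apply in_time_le with t1; lra || auto).
assert (UB : forall p q, t0 <= p -> p <= q -> q <= t1 -> RInt U p q <= (q - p) * M).
{ intros p q hp hpq hq. rewrite Rmult_comm.
  replace (M * (q - p)) with (RInt (fun _ => M) p q) by (rewrite RInt_const; simpl; unfold scal; simpl; unfold mult; simpl; ring).
  apply RInt_le; auto. apply exU; try lra. apply in_time_le with t1; lra || auto.
  apply ex_RInt_const. intros x Hx. apply (HM x); lra. }
destruct (V_facts u v Hu0 (ltac:(lra)) hv) as [DV [DV0 _]].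
destruct (V_facts u s Hu0 (ltac:(lra)) hst) as [DVs [DVs0 _]].
destruct (V_facts s v (proj1 hs) (ltac:(lra)) hv) as [DVv [DVv0 _]].
assert (Es1 := UB u s Hu0 Hu2 ltac:(lra)).
assert (Es2 := UB s v ltac:(lra) Hv1 Hv0).
assert (Ku : V s - V u < del) by nra.
assert (Kv : V v - V s < del) by nra.
destruct (albe_range u hu Hu0) as [Ru1 [Ru2 Ru3]].
destruct (albe_range v hv (ltac:(lra))) as [Rv1 [Rv2 Rv3]].
set (hA := h (al s) s). set (hB := h (be s) s).
assert (Aord : al v <= al u) by (unfold al; lra).
assert (Bord : be u <= be v) by (unfold be; lra).
assert (Adist1 : Rabs (al u - al s) < del) by (apply Rabs_def1; unfold al; lra).
assert (Adist2 : Rabs (al v - al s) < del) by (apply Rabs_def1; unfold al; lra).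
assert (Bdist1 : Rabs (be u - be s) < del) by (apply Rabs_def1; unfold be; lra).
assert (Bdist2 : Rabs (be v - be s) < del) by (apply Rabs_def1; unfold be; lra).
apply Rabs_def2 in Adist1. apply Rabs_def2 in Adist2.
apply Rabs_def2 in Bdist1. apply Rabs_def2 in Bdist2.
assert (Ch : W v = RInt (fun x => h x v) (al v) (al u) + RInt (fun x => h x v) (al u) (be u)
                  + RInt (fun x => h x v) (be u) (be v)).
{ unfold W.
  assert (ex1 : ex_RInt (fun x => h x v) (al v) (al u)) by (apply ex_RInt_h; auto; lra).
  assert (ex2 : ex_RInt (fun x => h x v) (al u) (be u)) by (apply ex_RInt_h; auto; lra).
  assert (ex3 : ex_RInt (fun x => h x v) (be u) (be v)) by (apply ex_RInt_h; auto; lra).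
  rewrite <- (RInt_Chasles _ (al v) (al u) (be v) ex1).
  2:{ apply ex_RInt_h; auto; lra. }
  rewrite <- (RInt_Chasles _ (al u) (be u) (be v) ex2 ex3).
  change (RInt (fun x => h x v) (al v) (al u) + (RInt (fun x => h x v) (al u) (be u) + RInt (fun x => h x v) (be u) (be v)) =
    RInt (fun x => h x v) (al v) (al u) + RInt (fun x => h x v) (al u) (be u) + RInt (fun x => h x v) (be u) (be v)).
  ring. }
assert (AD := area_diff (al u) (be u) u v ltac:(lra) Ru2 ltac:(lra) ltac:(lra) ltac:(lra) hv).
assert (T1 : (al u - al v) * (hA - eta) <= RInt (fun x => h x v) (al v) (al u)).
{ apply RInt_lower. lra. apply ex_RInt_h; auto; lra.
  intros x Hx. assert (K : Rabs (h x v - hA) < eta).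
  { apply Ha. apply Rabs_def1; lra. apply Rabs_def1; lra. }
  apply Rabs_def2 in K. lra. }
assert (T3 : (be v - be u) * (hB - eta) <= RInt (fun x => h x v) (be u) (be v)).
{ apply RInt_lower. lra. apply ex_RInt_h; auto; lra.
  intros x Hx. assert (K : Rabs (h x v - hB) < eta).
  { apply Hb. apply Rabs_def1; lra. apply Rabs_def1; lra. }
  apply Rabs_def2 in K. lra. }
set (c := hA + hB + 2 * eta).
assert (T2 : - c * RInt U u v <= RInt (fun s0 => g (be u) s0 - g (al u) s0) u v).
{ assert (exU' : ex_RInt U u v) by (apply exU; lra || auto).
  replace (- c * RInt U u v) with (RInt (fun s0 => scal (- c) (U s0)) u v).
  2:{ assert (RS := @RInt_scal R_CompleteNormedModule U u v (- c) exU'). exact RS. }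
  apply (RInt_le (fun s0 => scal (- c) (U s0)) (fun s0 => g (be u) s0 - g (al u) s0) u v); [lra| | |].
  - exact (@ex_RInt_scal R_NormedModule U u v (- c) exU').
  - apply (@ex_RInt_continuous R_CompleteNormedModule). intros z Hz.
    rewrite Rmin_left, Rmax_right in Hz by lra.
    assert (hz : in_time T z) by (apply in_time_le with v; lra || auto).
    apply (@continuous_minus R_UniformSpace R_AbsRing R_NormedModule); apply g_cont_t; auto; lra.
  - intros z Hz. assert (hz : in_time T z) by (apply in_time_le with v; lra || auto).
    assert (G1 := g_bound (be u) z ltac:(lra) hz).
    assert (G2 := g_bound (al u) z ltac:(lra) hz).
    assert (KB : Rabs (h (be u) z - hB) < eta).
    { apply Hb. apply Rabs_def1; lra. apply Rabs_def1; lra. }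
    assert (KA : Rabs (h (al u) z - hA) < eta).
    { apply Ha. apply Rabs_def1; lra. apply Rabs_def1; lra. }
    apply Rabs_def2 in KB. apply Rabs_def2 in KA.
    assert (Uz : 0 <= U z) by (destruct (HM z) as [[H1 _] _]; lra).
    apply abs_le_inv in G1. apply abs_le_inv in G2.
    change (scal (- c) (U z)) with (- c * U z). unfold c.
    assert (U z * h (be u) z <= U z * (hB + eta)) by (apply Rmult_le_compat_l; lra).
    assert (U z * h (al u) z <= U z * (hA + eta)) by (apply Rmult_le_compat_l; lra).
    replace (- (hA + hB + 2 * eta) * U z) with (- (U z * (hB + eta)) - U z * (hA + eta)) by ring.
    lra. }
assert (EA : al u - al v = RInt U u v) by (unfold al; lra).
assert (EB : be v - be u = RInt U u v) by (unfold be; lra).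
rewrite EA in T1. rewrite EB in T3.
unfold W at 2. rewrite Ch.
rewrite DV.
assert (eq4 : eps = 4 * eta) by (unfold eta; field).
rewrite eq4.
assert (ID : RInt U u v * (hA - eta) + RInt U u v * (hB - eta) + (- c * RInt U u v) = - (4 * eta) * RInt U u v)
  by (unfold c; ring).
lra.
Qed.

Lemma mono t1 : in_time T t1 -> t0 <= t1 -> W t0 <= W t1.
Proof.
intros ht1 h01.
assert (Heps : forall eps, 0 < eps -> W t1 - W t0 >= - eps * (V t1 - V t0)).
{ intros eps e0.
  assert (Pc := cousin (fun u v => t0 <= u -> v <= t1 -> W v - W u >= - eps * (V v - V u)) t0 t1 h01).
  simpl in Pc. apply Pc; [| |lra|lra].
  - intros u v w uv vw P1 P2 hu hw.
    specialize (P1 hu ltac:(lra)). specialize (P2 ltac:(lra) hw). lra.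
  - intros s hs. destruct (local_est t1 eps ht1 h01 e0 s hs) as [d [d0 Hd]].
    exists d; split; auto. }
destruct (V_facts t0 t1 (Rle_refl t0) h01 ht1) as [E1 [E2 E3]].
assert (Vs := Vsmall t1 ht1 h01).
assert (X0 : 0 <= V t1 - V t0 < dd) by lra.
assert (dd0 : 0 < dd) by (unfold dd; lra).
destruct (Rle_dec (W t0) (W t1)) as [ok|nok]; auto.
exfalso.
set (eps := (W t0 - W t1) / (2 * dd)).
assert (e0 : 0 < eps) by (unfold eps; apply Rdiv_lt_0_compat; lra).
assert (H := Heps eps e0).
assert (K : eps * (V t1 - V t0) <= eps * dd) by (apply Rmult_le_compat_l; lra).
assert (K2 : eps * dd = (W t0 - W t1) / 2) by (unfold eps; field; lra).
lra.
Qed.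

Lemma W0_pos : 0 < W t0.
Proof.
destruct (albe_range t0 t0time (Rle_refl t0)) as [R1 [R2 R3]].
assert (V0 : V t0 = 0) by (unfold V; rewrite RInt_point; reflexivity).
unfold W. apply RInt_gt_0.
- unfold al, be. rewrite V0. unfold dd. lra.
- intros x Hx. apply h_pos; auto; lra.
- intros x Hx. unfold h.
  apply (@continuous_minus R_UniformSpace R_AbsRing R_NormedModule); apply fx_cont; auto; lra.
Qed.

Lemma W_le t : in_time T t -> t0 <= t -> W t <= RInt (fun x => h x t) a b.
Proof.
intros ht h0. destruct (albe_range t ht h0) as [R1 [R2 R3]].
unfold W.
assert (e1 : ex_RInt (fun x => h x t) a (al t)) by (apply ex_RInt_h; auto; lra).
assert (e2 : ex_RInt (fun x => h x t) (al t) (be t)) by (apply ex_RInt_h; auto; lra).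
assert (e3 : ex_RInt (fun x => h x t) (be t) b) by (apply ex_RInt_h; auto; lra).
rewrite <- (RInt_Chasles _ a (al t) b e1).
2:{ apply ex_RInt_h; auto; lra. }
rewrite <- (RInt_Chasles _ (al t) (be t) b e2 e3).
assert (P1 : 0 <= RInt (fun x => h x t) a (al t)).
{ apply RInt_ge_0; auto; try lra. intros x Hx. left; apply h_pos; auto; lra. }
assert (P3 : 0 <= RInt (fun x => h x t) (be t) b).
{ apply RInt_ge_0; auto; try lra. intros x Hx. left; apply h_pos; auto; lra. }
change (RInt (fun x => h x t) (al t) (be t) <= RInt (fun x => h x t) a (al t) +
   (RInt (fun x => h x t) (al t) (be t) + RInt (fun x => h x t) (be t) b)).
lra.
Qed.

End Main.

Definition BCT_stmt := forall (F : nat -> R -> R) (a b B : R), a < b ->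
  (forall n x, continuity_pt (F n) x) ->
  (forall n x, 0 <= F n x <= B) ->
  (forall x, Un_cv (fun n => F n x) 0) ->
  Un_cv (fun n => RInt (F n) a b) 0.

Definition clamp (a b x : R) := Rmax a (Rmin b x).

Lemma clamp_lip a b x y : a <= b -> Rabs (clamp a b y - clamp a b x) <= Rabs (y - x).
Proof. intros ab. unfold clamp, Rmax, Rmin. repeat destruct Rle_dec; unfold Rabs; repeat destruct Rcase_abs; lra. Qed.

Lemma clamp_in a b x : a <= b -> a <= clamp a b x <= b.
Proof. intros ab. unfold clamp, Rmax, Rmin. repeat destruct Rle_dec; lra. Qed.

Lemma clamp_id a b x : a <= x <= b -> clamp a b x = x.
Proof. intros ab. unfold clamp, Rmax, Rmin. repeat destruct Rle_dec; lra. Qed.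

Lemma clamp_cont a b x : a <= b -> continuous (clamp a b) x.
Proof.
intros ab. apply cont_eps. intros eps e0. exists eps; split; auto.
intros y Hy. eapply Rle_lt_trans; [apply clamp_lip; auto|auto].
Qed.

Lemma theorem1_aux (bct : BCT_stmt) (T : Rbar) (psi : R -> R -> R -> R) (a b : R)
  (fm fp : R -> R -> R) :
  Rbar_lt (Finite 0) T ->
  smooth_on_strip T psi ->
  a < b ->
  C1_on_rect a b T fm ->
  C1_on_rect a b T fp ->
  (forall x1 t, a <= x1 <= b -> in_time T t -> fm x1 t < fp x1 t) ->
  (forall x1 t, a <= x1 <= b -> in_time T t ->
     vel2 psi x1 (fp x1 t) t = d_x1 fp x1 t * vel1 psi x1 (fp x1 t) t + d_t fp x1 t) ->
  (forall x1 t, a <= x1 <= b -> in_time T t ->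
     vel2 psi x1 (fm x1 t) t = d_x1 fm x1 t * vel1 psi x1 (fm x1 t) t + d_t fm x1 t) ->
  (exists C : R, forall s : R, in_time T s ->
     ex_RInt (vel_sup psi a b fm fp) 0 s /\ RInt (vel_sup psi a b fm fp) 0 s <= C) ->
  ~ ((exists B : R, forall x1 t, a <= x1 <= b -> in_time T t ->
        Rabs (fp x1 t - fm x1 t) <= B) /\
     (forall x1, a <= x1 <= b -> lim_left_at (fun t => fp x1 t - fm x1 t) T 0)).
Proof.
intros HT [O [HO [_ HOs]]] Hab [Om [HOm [_ HOms]]] [Op [HOp [_ HOps]]] Hord Hiip Hiim [C HC]
  [[B HB] Hlim].
assert (Hpsi : forall l x y t, in_time T t ->
  continuous (uncurry3 (iter_pd3 l psi)) (x, y, t) /\ forall i, ex_pd3 i (iter_pd3 l psi) x y t).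
{ intros l x y t ht. apply HOs. apply HO. exact ht. }
assert (Hfm : C1f T a b fm) by (intros x t hx ht; apply HOms; apply HOm; auto).
assert (Hfp : C1f T a b fp) by (intros x t hx ht; apply HOps; apply HOp; auto).
set (Uf := U psi a b fm fp).
assert (HCi : forall s, in_time T s -> ex_RInt Uf 0 s) by (intros s hs; apply (HC s hs)).
assert (Unn : forall t, in_time T t -> 0 <= Uf t).
{ intros t ht. destruct (U_bound T psi a b fm fp Hab Hpsi Hfp Hfm Hord t t) as [M HM];
  [split; [apply ht|lra]|auto|]. destruct (HM t) as [[H1 _] _]; [lra|auto]. }
assert (Umono : forall p q, 0 <= p -> p <= q -> in_time T q -> RInt Uf 0 p <= RInt Uf 0 q).
{ intros p q hp hpq hq.
  assert (hpt : in_time T p) by (apply in_time_le with q; auto).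
  rewrite <- (RInt_Chasles Uf 0 p q (HCi p hpt)).
  2:{ apply (ex_RInt_Chasles_2 Uf 0 p q); [lra|apply HCi; auto]. }
  assert (0 <= RInt Uf p q).
  { apply RInt_ge_0; auto. apply (ex_RInt_Chasles_2 Uf 0 p q); [lra|apply HCi; auto].
    intros x Hx. apply Unn. apply in_time_le with q; auto; lra. }
  change (RInt Uf 0 p <= RInt Uf 0 p + RInt Uf p q). lra. }
assert (ht00 : in_time T 0) by (split; [lra|auto]).
set (S := fun r => exists s, in_time T s /\ r = RInt Uf 0 s).
destruct (completeness S) as [L [HL1 HL2]].
{ exists C. intros r [s [hs ->]]. apply (HC s hs). }
{ exists (RInt Uf 0 0). exists 0. split; auto. }
set (kap := dd a b).
assert (kap0 : 0 < kap) by (unfold kap, dd; lra).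
assert (Hs1 : exists s1, in_time T s1 /\ L - kap < RInt Uf 0 s1).
{ apply NNPP; intro Hn. assert (L <= L - kap); [|lra].
  apply HL2. intros r [s [hs ->]].
  destruct (Rle_dec (RInt Uf 0 s) (L - kap)); auto.
  exfalso; apply Hn; exists s; split; auto; lra. }
destruct Hs1 as [s1 [hs1 Hs1]].
destruct (time_next T s1 hs1) as [t0 [st0 ht0]].
assert (t0pos : 0 < t0) by (destruct hs1; lra).
assert (Vsmall : forall t, in_time T t -> t0 <= t -> V psi a b fm fp t0 t < dd a b).
{ intros t ht h0. unfold V. fold Uf.
  assert (E : RInt Uf t0 t = RInt Uf 0 t - RInt Uf 0 t0).
  { rewrite <- (RInt_Chasles Uf 0 t0 t (HCi t0 ht0)).
    2:{ apply (ex_RInt_Chasles_2 Uf 0 t0 t); [lra|apply HCi; auto]. }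
    change (@eq R (RInt Uf t0 t) (RInt Uf 0 t0 + RInt Uf t0 t - RInt Uf 0 t0)). lra. }
  rewrite E.
  assert (K1 : RInt Uf 0 t <= L) by (apply HL1; exists t; auto).
  assert (K2 : RInt Uf 0 s1 <= RInt Uf 0 t0) by (apply Umono; auto; try lra; destruct hs1; lra).
  fold kap. lra. }
assert (W0 := W0_pos T psi a b fm fp Hab Hpsi Hfp Hfm Hord HCi t0 t0pos ht0 Vsmall).
assert (Wm := mono T psi a b fm fp Hab Hpsi Hfp Hfm Hord Hiip Hiim HCi t0 t0pos Vsmall).
assert (Wl := W_le T psi a b fm fp Hab Hpsi Hfp Hfm Hord HCi t0 t0pos Vsmall).
set (tn := fun n : nat => match T with
   | Finite T' => T' - (T' - t0) / (INR n + 1)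
   | _ => t0 + INR n end).
assert (Htn : forall n, in_time T (tn n) /\ t0 <= tn n).
{ intros n. assert (hn := pos_INR n). destruct ht0 as [h1 h2]. unfold tn.
  destruct T as [T'| |]; simpl in h2 |- *; try contradiction.
  - assert (0 < (T' - t0) / (INR n + 1)) by (apply Rdiv_lt_0_compat; lra).
    assert ((T' - t0) / (INR n + 1) <= T' - t0).
    { apply Rmult_le_reg_r with (INR n + 1); [lra|]. field_simplify; [nra|lra]. }
    split; [split; simpl; lra|lra].
  - split; [split; simpl; auto; lra|lra]. }
assert (Hev : forall s : R, Rbar_lt s T -> exists N, forall n, (N <= n)%nat -> s < tn n).
{ intros s Hs. destruct ht0 as [h1 h2]. unfold tn.
  destruct T as [T'| |]; simpl in Hs, h2 |- *; try contradiction.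
  - destruct (Rlt_dec s t0) as [st|st].
    { exists 0%nat. intros n _. assert (hn := pos_INR n).
      assert ((T' - t0) / (INR n + 1) <= T' - t0).
      { apply Rmult_le_reg_r with (INR n + 1); [lra|]. field_simplify; [nra|lra]. }
      assert (0 < (T' - t0) / (INR n + 1)) by (apply Rdiv_lt_0_compat; lra). lra. }
    destruct (INR_unbounded ((T' - t0) / (T' - s))) as [N HN].
    exists N. intros n Hn. apply le_INR in Hn.
    assert (hn := pos_INR n).
    assert (K : (T' - t0) / (INR n + 1) < T' - s).
    { apply Rmult_lt_reg_r with (INR n + 1); [lra|].
      unfold Rdiv. rewrite Rmult_assoc, Rinv_l, Rmult_1_r by lra.
      assert (K2 : (T' - t0) / (T' - s) * (T' - s) = T' - t0) by (field; intro; lra).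
      assert (K3 : (T' - t0) / (T' - s) * (T' - s) < (INR n + 1) * (T' - s)).
      { apply Rmult_lt_compat_r; lra. }
      lra. }
    lra.
  - destruct (INR_unbounded (s - t0)) as [N HN].
    exists N. intros n Hn. apply le_INR in Hn. lra. }
set (F := fun n x => h fm fp (clamp a b x) (tn n)).
assert (HF := bct F a b B Hab).
assert (Hlim0 : Un_cv (fun n => RInt (F n) a b) 0).
{ apply HF.
  - intros n x. apply continuity_pt_filterlim. unfold F.
    apply (continuous_comp (clamp a b) (fun z => h fm fp z (tn n))).
    + apply clamp_cont; lra.
    + destruct (Htn n) as [hn _]. assert (hc := clamp_in a b x ltac:(lra)). unfold h.
      apply (@continuous_minus R_UniformSpace R_AbsRing R_NormedModule);
      apply (fx_cont T a b); auto.
  - intros n x. destruct (Htn n) as [hn _]. assert (hc := clamp_in a b x ltac:(lra)).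
    assert (P := h_pos T a b fm fp Hord (clamp a b x) (tn n) hc hn).
    assert (Q := HB (clamp a b x) (tn n) hc hn). unfold F. unfold h in *.
    rewrite Rabs_pos_eq in Q by lra. lra.
  - intros x eps e0. assert (hc := clamp_in a b x ltac:(lra)).
    destruct (Hlim (clamp a b x) hc eps e0) as [s [s0 [sT Hs]]].
    destruct (Hev s sT) as [N HN]. exists N. intros n Hn.
    unfold R_dist, F, h. destruct (Htn n) as [[_ hn] _].
    apply (Hs (tn n)); auto. }
destruct (Hlim0 (W psi a b fm fp t0 t0) W0) as [N HN].
specialize (HN N (le_n N)). unfold R_dist in HN.
destruct (Htn N) as [hN hN0].
assert (E : RInt (F N) a b = RInt (fun x => h fm fp x (tn N)) a b).
{ apply RInt_ext. intros x Hx. rewrite Rmin_left, Rmax_right in Hx by lra.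
  unfold F. rewrite clamp_id; auto; lra. }
rewrite E in HN.
assert (K1 := Wm (tn N) hN hN0).
assert (K2 := Wl (tn N) hN hN0).
rewrite Rminus_0_r in HN. apply Rabs_def2 in HN. lra.
Qed.


Module BCTM.
From HB Require Import structures.
From mathcomp Require Import all_boot all_order all_algebra.
From mathcomp Require Import all_classical all_reals all_analysis.
From mathcomp Require Import Rstruct Rstruct_topology.
Import Order.TTheory GRing.Theory Num.Theory.
Import numFieldNormedType.Exports.
Local Open Scope classical_set_scope.
Local Open Scope ring_scope.
Definition RR : realType := Rdefinitions.R.


Lemma normRabs (x : RR) : `|x| = Rabs x.
Proof. by []. Qed.

Lemma deriv_tr (f : RR -> RR) (x l : RR) : derivable_pt_lim f x l -> derivable f x 1 /\ derive f x 1 = l.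
Proof.
move=> Hd.
have H : h^-1 *: ((f \o shift x) (h *: (1:RR)) - f x) @[h --> 0^'] --> l.
  apply/cvgrPdist_lt => e /RltP e0.
  have [d Hdd] := Hd e e0.
  apply/nbhs_ballP; exists (pos d); first by apply/RltP; apply: cond_pos.
  move=> y /= Hy yn0.
  rewrite /ball /= in Hy.
  have Hy' : (Rabs y < d)%coqR. rewrite sub0r normrN in Hy. by apply/RltP.
  have yn0' : y <> 0%coqR by move/eqP: yn0.
  have := Hdd y yn0' Hy'.
  move=> HH; apply/RltP.
  rewrite distrC.
  have -> : y%:A + x = (x + y)%coqR by rewrite /GRing.scale /= mulr1 addrC.
  rewrite /GRing.scale /=.
  rewrite mulrC.
  exact: HH.
split; first by apply/cvg_ex; exists l.
exact: cvg_lim.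
Qed.

Lemma RInt_leb (f : RR -> RR) (a b : RR) : (a < b)%coqR -> (forall x, continuity_pt f x) ->
  (\int[lebesgue_measure]_(x in `[a, b]) (f x)%:E)%E = (RInt f a b)%:E.
Proof.
move=> ab cf.
pose F (x : RR) : RR := RInt f a x.
have dF : forall x : RR, derivable_pt_lim F x (f x).
  move=> x; apply/is_derive_Reals.
  apply: (is_derive_RInt f F a x).
    exists (mkposreal 1 Rlt_0_1) => y _; apply: RInt_correct.
    apply: ex_RInt_continuous => z _.
    by apply/continuity_pt_filterlim.
  by apply/continuity_pt_filterlim.
have cF : forall x : RR, {for x, continuous F}.
  move=> x; apply/continuity_pt_cvg.
  apply: derivable_continuous_pt; exists (f x); exact: dF.
have cf' : continuous f by move=> x; apply/continuity_pt_cvg.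
rewrite (@continuous_FTC2 _ f F a b).
- rewrite /F RInt_point.
  have -> : (Hierarchy.zero : R) = 0 by [].
  rewrite -EFinD; congr (_%:E); simpl; exact: subr0.
- by move/RltP: ab.
- exact: continuous_subspaceT.
- split.
  + move=> x _; case: (deriv_tr _ _ _ (dF x)) => H1 _; exact: H1.
  + exact: cvg_at_right_filter (cF a).
  + exact: cvg_at_left_filter (cF b).
- by move=> x _; rewrite derive1E; exact: (deriv_tr _ _ _ (dF x)).2.
Qed.

Lemma Un_cv_mc (u : nat -> RR) (l : RR) : Un_cv u l -> u n @[n --> \oo] --> l.
Proof.
move=> H; apply/cvgrPdist_lt => e /RltP e0.
have [N HN] := H e e0.
exists N => // n /= Hn.
have := HN n (ssrnat.leP Hn).
rewrite /R_dist => /RltP.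
by rewrite distrC.
Qed.

Lemma mc_Un_cv (u : nat -> RR) (l : RR) : u n @[n --> \oo] --> l -> Un_cv u l.
Proof.
move/cvgrPdist_lt => H e e0.
have e0' : 0 < e by apply/RltP.
have [N _ HN] := H e e0'.
exists N => n Hn.
have := HN n (introT ssrnat.leP Hn).
rewrite /R_dist distrC => /RltP; done.
Qed.

Lemma bct (F : nat -> RR -> RR) (a b B : RR) : (a < b)%coqR ->
  (forall n x, continuity_pt (F n) x) ->
  (forall n x, (0 <= F n x <= B)%coqR) ->
  (forall x, Un_cv (fun n => F n x) 0) ->
  Un_cv (fun n => RInt (F n) a b) 0.
Proof.
move=> ab cF bF lF.
apply: mc_Un_cv.
have cF' : forall n, continuous (F n) by move=> n x; apply/continuity_pt_cvg.
have H := @dominated_cvg _ _ _ lebesgue_measure `[a, b] (measurable_itv _)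
  (fun n x => (F n x)%:E) (cst 0%E) (cst B%:E).
have HH : (\int[lebesgue_measure]_(x in `[a, b]) (F n x)%:E)%E @[n --> \oo] --> 
    (\int[lebesgue_measure]_(x in `[a, b]) (cst 0%E x))%E.
  apply: H.
  - move=> n; apply/measurable_realfun.measurable_EFinP; apply: measurable_funTS; exact: measurable_realfun.continuous_measurable_fun.
  - move=> x _; apply: cvg_EFin; first by apply: nearW.
    exact: (Un_cv_mc (fun n => F n x) 0 (lF x)).
  - by [].
  - apply: continuous_compact_integrable; first exact: segment_compact.
    apply: continuous_subspaceT => x; exact: cst_continuous.
  - move=> n x _ /=; rewrite lee_fin.
    have [h1 h2] := bF n x.
    rewrite ger0_norm; first by apply/RleP.
    by apply/RleP.
rewrite integral0 in HH.
have E : forall n, (\int[lebesgue_measure]_(x in `[a, b]) (F n x)%:E)%E = (RInt (F n) a b)%:E.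
  move=> n; exact: RInt_leb.
have HH' : (RInt (F n) a b)%:E @[n --> \oo] --> (0:RR)%:E.
  have -> : (fun n => (RInt (F n) a b)%:E) = (fun n => (\int[lebesgue_measure]_(x in `[a, b]) (F n x)%:E)%E).
    by apply: funext => n; rewrite E.
  exact: HH.
exact: fine_cvg HH'.
Qed.

End BCTM.

Lemma bct_ok : BCT_stmt.
Proof. intros F a b B. exact (BCTM.bct F a b B). Qed.

Theorem theorem1 (T : Rbar) (psi : R -> R -> R -> R) (a b : R)
  (fm fp : R -> R -> R) :
  Rbar_lt (Finite 0) T ->
  smooth_on_strip T psi ->
  a < b ->
  C1_on_rect a b T fm ->
  C1_on_rect a b T fp ->
  (* (i) *)
  (forall x1 t, a <= x1 <= b -> in_time T t -> fm x1 t < fp x1 t) ->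
  (* (ii) the arcs x2 = f_pm(x1,t) move with the fluid *)
  (forall x1 t, a <= x1 <= b -> in_time T t ->
     vel2 psi x1 (fp x1 t) t = d_x1 fp x1 t * vel1 psi x1 (fp x1 t) t + d_t fp x1 t) ->
  (forall x1 t, a <= x1 <= b -> in_time T t ->
     vel2 psi x1 (fm x1 t) t = d_x1 fm x1 t * vel1 psi x1 (fm x1 t) t + d_t fm x1 t) ->
  (* (iii) int_0^T sup |u| dt < oo *)
  (exists C : R, forall s : R, in_time T s ->
     ex_RInt (vel_sup psi a b fm fp) 0 s /\ RInt (vel_sup psi a b fm fp) 0 s <= C) ->
  ~ ((exists B : R, forall x1 t, a <= x1 <= b -> in_time T t ->
        Rabs (fp x1 t - fm x1 t) <= B) /\
     (forall x1, a <= x1 <= b -> lim_left_at (fun t => fp x1 t - fm x1 t) T 0)).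
Proof.
  exact (theorem1_aux bct_ok T psi a b fm fp).
Qed.
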